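(* Let $g\in\mathrm{SL}_3(\mathbb{R})$ and suppose there are $\mu>1$ and a positive integer $m$ such that $P_0:=\ker(g^m-\mu\,\mathrm{id})$ is two-dimensional and $L_0:=\ker(g^m-\mu^{-2}\mathrm{id})$ is one-dimensional. Let $X\subset\mathbb{RP}^2$ be a finite $g$-invariant set of lines contained in $P_0$, and let $\mathcal{A}$ be the set of prepared neighborhoods of $X$. Then $A_1\cap\cdots\cap A_n\in\mathcal{A}$ for all $A_1,\dots,A_n\in\mathcal{A}$, and $\bigcap_{A\in\mathcal{A}}A=\bigcup_{x\in X}\mathbb{P}(x\oplus L_0)$.
   Context: For a line $x$ and the line $L_0$, $\mathbb{P}(x\oplus L_0)\subset\mathbb{RP}^2$ denotes the set of lines contained in the subspace $x\oplus L_0$. A set $A\subset\mathbb{RP}^2$ is a prepared neighborhood of $X$ (with respect to $g$) if $X$ is contained in the interior of $A$, $g(A)=A$, and $A=\bigcup_{x\in A}\mathbb{P}(x\oplus L_0)$. *)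

(* Defs.v *)
From HB Require Import structures.
From mathcomp Require Import all_boot all_order all_algebra.
From mathcomp Require Import all_classical all_reals all_analysis.
Set Implicit Arguments. Unset Strict Implicit. Unset Printing Implicit Defensive.
Import Order.TTheory GRing.Theory Num.Theory.
Import numFieldNormedType.Exports.
Local Open Scope classical_set_scope.
Local Open Scope ring_scope.

(* Points of RP^2 = one-dimensional linear subspaces of R^3. *)
Definition line (R : realType) := {L : {vspace 'cV[R]_3} | \dim L == 1%N}.

Definition mxlin (R : realType) (M : 'M[R]_3) : 'End('cV[R]_3) :=
  linfun (fun v : 'cV[R]_3 => M *m v).

Definition mxker (R : realType) (M : 'M[R]_3) : {vspace 'cV[R]_3} := lker (mxlin M).

(* Quotient topology on RP^2: U is open iff its preimage in R^3 \ {0}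
   (which is open in R^3) is open. *)
Definition RP2_open (R : realType) (U : set (line R)) : Prop :=
  open (s := 'cV[R]_3) [set v : 'cV[R]_3 | v != 0 /\ exists x : line R, U x /\ val x = <[v]>%VS].

Definition RP2_interior (R : realType) (A : set (line R)) : set (line R) :=
  [set x | exists U : set (line R), [/\ RP2_open U, U x & U `<=` A]].

Definition RP2_image (R : realType) (g : 'M[R]_3) (A : set (line R)) : set (line R) :=
  [set y | exists2 x, A x & val y = (mxlin g @: val x)%VS].

Definition Pspace (R : realType) (V : {vspace 'cV[R]_3}) : set (line R) :=
  [set y | (val y <= V)%VS].

Definition prepared (R : realType) (g : 'M[R]_3) (L0 : {vspace 'cV[R]_3})
    (X A : set (line R)) : Prop :=
  [/\ X `<=` RP2_interior A,
      RP2_image g A = A &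
      A = \bigcup_(x in A) Pspace (val x + L0)%VS].

(* Main.v *)
Require Import Defs.
From HB Require Import structures.
From mathcomp Require Import all_boot all_order all_algebra.
From mathcomp Require Import all_classical all_reals all_analysis.
From mathcomp Require Import lra.
Import Order.TTheory GRing.Theory Num.Theory.
Import numFieldNormedType.Exports.
Local Open Scope classical_set_scope.
Local Open Scope ring_scope.
Set Implicit Arguments. Unset Strict Implicit.

Section S.
Variable R : realType.

Lemma lin_coord (h : 'End('cV[R]_3)) (v : 'cV[R]_3) i :
  h v i 0 = \sum_j v j 0 * h (delta_mx j 0) i 0.
Proof.
rewrite {1}(matrix_sum_delta v) linear_sum summxE; apply: eq_bigr => j _.
rewrite big_ord1 linearZ /= mxE.
have -> : (0 : 'I_1) = ord0 by apply/val_inj.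
by [].
Qed.

Lemma cont_lin (c : 'I_3 -> R) : continuous (fun v : 'cV[R]_3 => \sum_j v j 0 * c j).
Proof.
apply: continuous_big => [|i _].
  exact: add_continuous.
move=> x; apply: continuousM; [exact: coord_continuous | exact: cst_continuous].
Qed.

Lemma closed_vs (U : {vspace 'cV[R]_3}) : closed [set v : 'cV[R]_3 | v \in U].
Proof.
set h := (\1 - projv U)%VF.
have -> : [set v : 'cV[R]_3 | v \in U] =
   \bigcap_(i in [set: 'I_3]) ((fun v : 'cV[R]_3 => \sum_j v j 0 * h (delta_mx j 0) i 0) @^-1` [set 0]).
  apply/seteqP; split => v /=.
    move=> vU i _ /=; rewrite -lin_coord /h add_lfunE opp_lfunE id_lfunE projv_id // subrr mxE //.
  move=> H; have : h v = 0.
    apply/matrixP => i j; rewrite ord1 mxE lin_coord; exact: H.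
  rewrite /h add_lfunE opp_lfunE id_lfunE => /eqP; rewrite subr_eq0 => /eqP ->; exact: memv_proj.
apply: closed_bigI => i _; apply: preimage_closed; [move=> x _; exact: cont_lin | exact: closed_eq].
Qed.

Implicit Types (U V W : {vspace 'cV[R]_3}).

Lemma line_dim (x : line R) : \dim (val x) = 1%N.
Proof. by apply/eqP; exact: (valP x). Qed.

Lemma mkline_proof (v : 'cV[R]_3) (hv : v != 0) : \dim <[v]>%VS == 1%N.
Proof. by rewrite dim_vline hv. Qed.

Definition mkline (v : 'cV[R]_3) (hv : v != 0) : line R := exist _ <[v]>%VS (mkline_proof hv).

Lemma imgline_proof (f : 'End('cV[R]_3)) (hf : lker f == 0%VS) (x : line R) :
  \dim (f @: val x)%VS == 1%N.
Proof. by rewrite limg_dim_eq ?line_dim // (eqP hf) capv0. Qed.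

Definition imgline f hf x : line R := exist _ (f @: val x)%VS (@imgline_proof f hf x).

Lemma mxlinE (M : 'M[R]_3) v : mxlin M v = M *m v.
Proof. by rewrite /mxlin lfunE. Qed.

Lemma mxlinM (A B : 'M[R]_3) : (mxlin A \o mxlin B)%VF = mxlin (A *m B).
Proof. by apply/lfunP => v; rewrite comp_lfunE !mxlinE mulmxA. Qed.

Lemma mxlin1 : mxlin (1%:M : 'M[R]_3) = \1%VF.
Proof. by apply/lfunP => v; rewrite id_lfunE mxlinE mul1mx. Qed.

Lemma dim2 U V : \dim U = 1%N -> \dim V = 1%N -> U != V -> \dim (U + V) = 2%N.
Proof.
move=> hU hV nUV; have := dimv_sum_cap U V; rewrite hU hV.
have : (\dim (U :&: V) <= 1)%N by have := dimvS (capvSl U V); rewrite hU.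
case: (ltngtP (\dim (U :&: V)) 1%N) => // [|h _].
  by rewrite ltnS leqn0 => /eqP -> _; rewrite addn0.
have e1 : (U :&: V)%VS = U by apply/eqP; rewrite eqEdim capvSl hU h.
have e2 : (U :&: V)%VS = V by apply/eqP; rewrite eqEdim capvSr hV h.
by move: nUV; rewrite -{1}e1 e2 eqxx.
Qed.

Lemma dimle2 U V : \dim U = 1%N -> \dim V = 1%N -> (\dim (U + V) <= 2)%N.
Proof. move=> hU hV; have := dimv_sum_cap U V; rewrite hU hV => e. by rewrite -(leq_add2r (\dim (U :&: V))) e leq_addr. Qed.

Lemma plane_eq U V L : \dim U = 1%N -> \dim V = 1%N -> \dim L = 1%N -> U != L ->
  (U + L <= V + L)%VS -> (U + L)%VS = (V + L)%VS.
Proof.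
move=> hU hV hL nUL sub; apply/eqP; rewrite eqEdim sub (dim2 hU hL nUL); exact: (dimle2 hV hL).
Qed.


Lemma open_bigcapI (T : topologicalType) n (F : 'I_n -> set T) :
  (forall i, open (F i)) -> open (\bigcap_(i in [set: 'I_n]) F i).
Proof.
elim: n F => [|n IH] F hF.
  have -> : \bigcap_(i in [set: 'I_0]) F i = setT.
    by apply/seteqP; split => // t _ [].
  exact: openT.
have -> : \bigcap_(i in [set: 'I_n.+1]) F i =
    F ord0 `&` \bigcap_(i in [set: 'I_n]) F (lift ord0 i).
  apply/seteqP; split => t.
    by move=> H; split; [exact: H | move=> i _; exact: H].
  move=> [H0 H] i _; case: (unliftP ord0 i) => [j -> | ->] //; exact: H.
apply: openI; first exact: hF.
by apply: IH => i; exact: hF.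
Qed.

Definition pre (U : set (line R)) : set 'cV[R]_3 :=
  [set v : 'cV[R]_3 | v != 0 /\ exists x : line R, U x /\ val x = <[v]>%VS].

Lemma pre_bigcap n (U : 'I_n.+1 -> set (line R)) :
  pre (\bigcap_(i in [set: 'I_n.+1]) U i) = \bigcap_(i in [set: 'I_n.+1]) pre (U i).
Proof.
apply/seteqP; split => v.
  by move=> [nv [x [Ux ex]]] i _; split => //; exists x; split => //; exact: Ux.
move=> H; have [nv [x [Ux ex]]] := H ord0 I; split => //; exists x; split => // i _.
have [_ [y [Uy ey]]] := H i I.
by have -> : x = y by apply: val_inj; rewrite ex ey.
Qed.

Lemma prepared_sat (g : 'M[R]_3) L0 X A x y : prepared g L0 X A -> A x ->
  (val y <= val x + L0)%VS -> A y.
Proof. by case=> _ _ E Ax hy; rewrite E; exists x. Qed.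

Lemma prepared_bigcap (g : 'M[R]_3) L0 X (hg : lker (mxlin g) == 0%VS) n
   (As : 'I_n.+1 -> set (line R)) :
  (forall i, prepared g L0 X (As i)) -> prepared g L0 X (\bigcap_(i in [set: 'I_n.+1]) As i).
Proof.
move=> hA; split.
- move=> x Xx.
  have hU : forall i, exists U : set (line R), [/\ RP2_open U, U x & U `<=` As i].
    by move=> i; case: (hA i) => /(_ x Xx) [U hU] _ _; exists U.
  have [Us hUs] := choice hU.
  exists (\bigcap_(i in [set: 'I_n.+1]) Us i); split.
  + rewrite /RP2_open; change (open (pre (\bigcap_(i in [set: 'I_n.+1]) Us i))); rewrite pre_bigcap.
    by apply: open_bigcapI => i; case: (hUs i).
  + by move=> i _; case: (hUs i).
  + by move=> w Hw i _; case: (hUs i) => _ _; apply; exact: Hw.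
- apply/seteqP; split => y.
    move=> [x Ax ey] i _; case: (hA i) => _ E _; rewrite -E; exists x => //; exact: Ax.
  move=> Ay.
  case: (hA ord0) => _ E0 _.
  have : RP2_image g (As ord0) y by rewrite E0; exact: Ay ord0 I.
  case => x Ax ey.
  exists x => // i _.
  case: (hA i) => _ Ei _.
  have : RP2_image g (As i) y by rewrite Ei; exact: Ay i I.
  case => z Az ez.
  have -> : x = z by apply: val_inj; apply/eqP; rewrite -(eq_limg_ker0 _ _ hg) -ey -ez.
  exact: Az.
- apply/seteqP; split => y.
    by move=> Ay; exists y => //; exact: addvSl.
  move=> [x Ax hy] i _; apply: (prepared_sat (hA i) (Ax i I) hy).
Qed.


Section Main.
Variables (g : 'M[R]_3) (mu : R) (m : nat).
Hypotheses (hdet : \det g = 1) (hmu : 1 < mu) (hm : (0 < m)%N).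
Let P0 := mxker (g ^+ m - mu%:M).
Let L0 := mxker (g ^+ m - (mu ^- 2)%:M).
Hypotheses (hP : \dim P0 = 2%N) (hL : \dim L0 = 1%N).

Let G := mxlin g.

Lemma G_ker : lker G == 0%VS.
Proof.
apply/lker0P => u v; rewrite /G !mxlinE => e.
have gu : g \in unitmx by rewrite unitmxE hdet unitr1.
by rewrite -(mulKmx gu u) e mulKmx.
Qed.

Lemma memP0 v : (v \in P0) = (g ^+ m *m v == mu *: v).
Proof. by rewrite /P0 /mxker memv_ker mxlinE mulmxBl mul_scalar_mx subr_eq0. Qed.

Lemma memL0 v : (v \in L0) = (g ^+ m *m v == mu ^- 2 *: v).
Proof. by rewrite /L0 /mxker memv_ker mxlinE mulmxBl mul_scalar_mx subr_eq0. Qed.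

Lemma mu_neq : mu != mu ^- 2.
Proof.
have h3 : 1 < mu * (mu * mu).
  move: hmu => h; have h1 : 1 < mu * mu by nra. nra.
apply/eqP => e.
have h2 : mu ^+ 2 != 0 by rewrite expf_neq0 // gt_eqF // (lt_trans ltr01 hmu).
have : mu * mu ^+ 2 = 1 by rewrite {1}e mulVf.
by rewrite expr2 => h; move: h3; rewrite h ltxx.
Qed.

Lemma P0L0 : (P0 :&: L0)%VS = 0%VS.
Proof.
apply/eqP; rewrite -subv0; apply/subvP => v; rewrite memv_cap memP0 memL0 memv0.
case/andP => /eqP -> /eqP /eqP; rewrite -subr_eq0 -scalerBl scaler_eq0 subr_eq0.
by rewrite (negbTE mu_neq).
Qed.

Lemma P0L0f : (P0 + L0)%VS = fullv.
Proof.
apply/eqP; rewrite eqEdim subvf dimvf dim_matrix.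
have := dimv_sum_cap P0 L0; rewrite P0L0 dimv0 hP hL addn0 => ->; by [].
Qed.

Lemma keyK v : g ^+ m *m v - mu *: v \in L0.
Proof.
have : v \in (P0 + L0)%VS by rewrite P0L0f memvf.
case/memv_addP => p pP [l lL ->].
move: (pP) (lL); rewrite memP0 memL0 => /eqP hp /eqP hl.
rewrite mulmxDr hp hl scalerDr opprD addrA (addrC (mu *: p)) addrK -scalerBl.
exact: memvZ.
Qed.

Let img U := (G @: U)%VS.

Lemma iter_img k U : iter k img U = (mxlin (g ^+ k) @: U)%VS.
Proof.
elim: k => [|k IH]; first by rewrite expr0 /= mxlin1 lim1g.
by rewrite iterS IH /img exprS -limg_comp mxlinM.
Qed.

Lemma iter_dim k U : \dim (iter k img U) = \dim U.
Proof.
elim: k => [|k IH] //; rewrite iterS /img limg_dim_eq //.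
by rewrite (eqP G_ker) capv0.
Qed.

Lemma iter_le k U V : (iter k img U <= iter k img V)%VS = (U <= V)%VS.
Proof. by elim: k => [|k IH] //; rewrite !iterS /img limg_ker0 ?G_ker. Qed.

Lemma img_L0 : img L0 = L0.
Proof.
apply/eqP; rewrite eqEdim /img limg_dim_eq ?(eqP G_ker) ?capv0 // leqnn andbT.
apply/subvP => w /memv_imgP [u uL ->]; move: uL; rewrite !memL0 /G mxlinE => /eqP hu.
by rewrite mulmxA -[g ^+ m *m g]/(g ^+ m * g) -exprSr exprS -mulmxA hu scalemxAr.
Qed.

Lemma iter_L0 k : iter k img L0 = L0.
Proof. by elim: k => [|k IH] //; rewrite iterS IH img_L0. Qed.

Lemma period W : (L0 <= W)%VS -> iter m img W = W.
Proof.
move=> LW; apply/eqP; rewrite eqEdim iter_dim leqnn andbT iter_img.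
apply/subvP => w /memv_imgP [u uW ->]; rewrite mxlinE.
rewrite -(subrK (mu *: u) (g ^+ m *m u)) addrC.
by apply: memvD; [exact: memvZ | exact: (subvP LW _ (keyK u))].
Qed.

Section Y.
Variables (X : set (line R)) (y : line R).
Hypotheses (hX : RP2_image g X = X) (hXP : forall x, X x -> (val x <= P0)%VS).
Variables (x0 : line R) (Xx0 : X x0).
Hypothesis (ny : ~ exists2 x, X x & (val y <= val x + L0)%VS).

Let W := (val y + L0)%VS.
Let Q k := iter k img W.

Lemma LW : (L0 <= W)%VS.
Proof. exact: addvSr. Qed.

Lemma iter_mul j : iter (j * m) img W = W.
Proof. by elim: j => [|j IH] //; rewrite mulSn iterD IH period // LW. Qed.

Lemma Qmod k : Q k = Q (k %% m).
Proof. by rewrite /Q {1}(divn_eq k m) addnC iterD iter_mul. Qed.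

Lemma L0Q k : (L0 <= Q k)%VS.
Proof. by rewrite -(iter_L0 k) /Q iter_le LW. Qed.

Lemma Qprev k : Q k = img (Q (k + m.-1)).
Proof.
have e : Q (k + m) = Q k by rewrite /Q iterD period // LW.
by rewrite -e /Q -iterS -addnS prednK.
Qed.

Lemma x_neq_L0 x : X x -> val x != L0.
Proof.
move=> Xx; apply/eqP => e; have := hXP Xx; rewrite e => LP.
have : (L0 <= P0 :&: L0)%VS by rewrite subv_cap LP subvv.
by rewrite P0L0 subv0 => /eqP h; move: hL; rewrite h dimv0.
Qed.

Lemma y_neq_L0 : val y != L0.
Proof. by apply/eqP => e; apply: ny; exists x0 => //; rewrite e addvSr. Qed.

Lemma pre_iter k x : X x -> exists2 x', X x' & val x = iter k img (val x').
Proof.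
elim: k x => [|k IH] x Xx; first by exists x.
have [x1 Xx1 e1] := IH x Xx.
have : RP2_image g X x1 by rewrite hX.
case=> x2 Xx2 e2; exists x2 => //.
by rewrite iterSr e1 e2.
Qed.

Definition Uset := [set w : line R | forall k, ~ (val w <= Q k)%VS].
Definition Aset := [set w : line R | val w = L0 \/ forall k, ~ (val w <= Q k)%VS].

Lemma X_U x : X x -> Uset x.
Proof.
move=> Xx k hk; have [x' Xx' ex] := pre_iter k Xx.
move: hk; rewrite ex /Q iter_le => hk.
apply: ny; exists x' => //.
have sub : (val x' + L0 <= val y + L0)%VS by rewrite subv_add addvSr andbT; exact: hk.
have e := plane_eq (line_dim x') (line_dim y) hL (x_neq_L0 Xx') sub.
by rewrite e addvSl.
Qed.

Lemma closed_fin n : closed [set v | exists2 k, (k < n)%N & v \in Q k].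
Proof.
elim: n => [|n IH].
  have -> : [set v | exists2 k, (k < 0)%N & v \in Q k] = set0.
    by apply/seteqP; split => v // [].
  exact: closed0.
have -> : [set v | exists2 k, (k < n.+1)%N & v \in Q k] =
   [set v | exists2 k, (k < n)%N & v \in Q k] `|` [set v | v \in Q n].
  apply/seteqP; split => v /=.
    move=> [k]; rewrite ltnS leq_eqVlt => /orP [/eqP -> | kn] vQ; [by right | by left; exists k].
  by case => [[k kn vQ] | vQ]; [exists k => //; exact: ltnW | exists n].
by apply: closedU => //; exact: closed_vs.
Qed.

Lemma pre_U : pre Uset = ~` [set v | exists2 k, (k < m)%N & v \in Q k].
Proof.
apply/seteqP; split => v /=.
  move=> [nv [x [Ux ex]]] [k _ vQ]; apply: (Ux k); rewrite ex -memvE; exact: vQ.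
move=> H.
have nv : v != 0.
  by apply/negP => /eqP v0; apply: H; exists 0%N => //; rewrite v0 mem0v.
split => //; exists (mkline nv); split => // k /= hk.
apply: H; exists (k %% m)%N; first exact: ltn_pmod.
by rewrite -Qmod memvE.
Qed.

Lemma U_open : RP2_open Uset.
Proof. rewrite /RP2_open; change (open (pre Uset)); rewrite pre_U openC; exact: closed_fin. Qed.

Lemma imgA w : Aset (imgline G_ker w) <-> Aset w.
Proof.
split.
- case => [/= e | H]; [left | right].
    apply/eqP; rewrite -(eq_limg_ker0 _ _ G_ker); apply/eqP.
    exact: (etrans e (esym img_L0)).
  move=> k hk; apply: (H k.+1); change (img (val w) <= img (Q k))%VS; rewrite /img limg_ker0 ?G_ker //.
- case => [e | H]; [left | right].
    by rewrite /= e; exact: img_L0.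
  move=> k /= hk; apply: (H (k + m.-1)%N).
  by move: hk; rewrite Qprev /img limg_ker0 ?G_ker.
Qed.

Lemma Ginv_ker : lker (G^-1)%VF == 0%VS.
Proof.
apply/lker0P => u v e.
by rewrite -[u]id_lfunE -[v]id_lfunE -(lker0_compfV G_ker) !comp_lfunE e.
Qed.

Lemma GGinv U : (G @: (G^-1 @: U))%VS = U.
Proof. by rewrite -limg_comp lker0_compfV ?G_ker // lim1g. Qed.

Lemma A_prep : prepared g L0 X Aset.
Proof.
split.
- move=> x Xx; exists Uset; split; [exact: U_open | exact: X_U | move=> w Uw; by right].
- apply/seteqP; split => z.
    case => w Aw ez.
    have -> : z = imgline G_ker w by apply: val_inj.
    by apply/imgA.
  move=> Az; exists (imgline Ginv_ker z).
    apply/imgA.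
    by have -> : imgline G_ker (imgline Ginv_ker z) = z by apply: val_inj; rewrite /= GGinv.
  by rewrite /= GGinv.
- apply/seteqP; split => z.
    by move=> Az; exists z => //; exact: addvSl.
  case => x Ax /= hz.
  have [e | ne] := eqVneq (val z) L0; first by left.
  right => k hk.
  case: Ax => [ex | Ux].
    move: hz; rewrite ex addvv => hz.
    have e : val z = L0 by apply/eqP; rewrite eqEdim hz line_dim hL.
    by move: ne; rewrite e eqxx.
  have sub : (val z + L0 <= val x + L0)%VS by rewrite subv_add hz addvSr.
  have e := plane_eq (line_dim z) (line_dim x) hL ne sub.
  apply: (Ux k); apply: subv_trans (addvSl (val x) L0) _.
  by rewrite -e subv_add hk L0Q.
Qed.

Lemma y_notA : ~ Aset y.
Proof.
case => [e | H]; first by move: y_neq_L0; rewrite e eqxx.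
by apply: (H 0%N); exact: addvSl.
Qed.

End Y.
End Main.
End S.

Unset Implicit Arguments.
Set Strict Implicit.

Theorem mainTheorem11 (R : realType) (g : 'M[R]_3) (mu : R) (m : nat)
  (X : set (line R)) :
  \det g = 1 -> 1 < mu -> (0 < m)%N ->
  \dim (mxker (g ^+ m - mu%:M)) = 2%N ->
  \dim (mxker (g ^+ m - (mu ^- 2)%:M)) = 1%N ->
  finite_set X -> RP2_image g X = X ->
  (forall x, X x -> (val x <= mxker (g ^+ m - mu%:M))%VS) ->
  let L0 := mxker (g ^+ m - (mu ^- 2)%:M) in
  let cA := [set A : set (line R) | prepared g L0 X A] in
  (forall (n : nat) (As : 'I_n.+1 -> set (line R)),
      (forall i, cA (As i)) -> cA (\bigcap_(i in setT) As i)) /\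
  \bigcap_(A in cA) A = \bigcup_(x in X) Pspace (val x + L0)%VS.
Proof.
move=> hdet hmu hm hP hL _ hX hXP L0 cA; split.
  by move=> n As hA; apply: prepared_bigcap => //; exact: G_ker hdet.
apply/seteqP; split => z.
  move=> Hz.
  case: (pselect (exists x, X x)) => [[x0 Xx0] | nX].
    apply: contrapT => ny.
    have := Hz _ (A_prep hdet hmu hm hP hL hX hXP ny).
    exact: (y_notA Xx0 ny).
  have p0 : prepared g L0 X set0.
    split.
    - by move=> x Xx; exfalso; apply: nX; exists x.
    - by apply/seteqP; split => w // [x].
    - by apply/seteqP; split => w // [x].
  by have := Hz _ p0.
case => x Xx hz A [Xint HA1 HA2].
have Ax : A x by case: (Xint x Xx) => U [_ Ux UA]; exact: UA.
exact: (prepared_sat (And3 Xint HA1 HA2) Ax hz).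
Qed.
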